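(* A $3$-ranked liner $X$ is Boolean if and only if every parallelogram in $X$ is Boolean.
   Context: A liner is a set $X$ of points with a family of subsets called lines such that any two distinct points lie in a unique line and every line contains at least two points. For distinct $x,y$, $\overline{xy}$ is the line through them and $\overline{xx}:=\{x\}$. A set is flat if it contains $\overline{xy}$ for all its distinct points; $\overline A$ is the smallest flat containing $A$; the rank $\|A\|$ is the smallest cardinality of $B\subseteq X$ with $A\subseteq\overline B$. $X$ is $3$-ranked if any flats $A\subseteq B$ with $\|A\|=\|B\|\le3$ are equal. A flat $A$ is subparallel to a flat $B$ if $A\subseteq\overline{\{a\}\cup B}$ for every $a\in A$; $A\parallel B$ means each is subparallel to the other. A parallelogram is a quadruple $abcd\in X^4$ with $\overline{ab}\parallel\overline{cd}\ne\overline{ab}$ and $\overline{bc}\parallel\overline{ad}\ne\overline{bc}$; it is Boolean if $\overline{ac}\parallel\overline{bd}$. $X$ is Boolean if for every quadruple $abcd\in X^4$, $\overline{ab}\cap\overline{cd}=\varnothing=\overline{bc}\cap\overline{ad}$ implies $\overline{ac}\cap\overline{bd}=\varnothing$. *)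

(* Defs.v *)
From Stdlib Require Import List Arith.
Import ListNotations.

Definition set (X : Type) := X -> Prop.
Definition subset {X} (A B : set X) : Prop := forall x, A x -> B x.
Definition seteq {X} (A B : set X) : Prop := forall x, A x <-> B x.
Definition disjoint {X} (A B : set X) : Prop := forall x, ~ (A x /\ B x).

Record Liner := {
  pt :> Type;
  is_line : set pt -> Prop;
  line_exists : forall x y : pt, x <> y ->
      exists L, is_line L /\ L x /\ L y;
  line_unique : forall (x y : pt) L L', x <> y ->
      is_line L -> L x -> L y -> is_line L' -> L' x -> L' y -> seteq L L';
  line_two : forall L, is_line L -> exists x y : pt, x <> y /\ L x /\ L y
}.

Section LinerDefs.
Variable X : Liner.

Definition line_through (x y : X) : set X :=
  fun z => (x = y /\ z = x) \/
           (x <> y /\ exists L, is_line X L /\ L x /\ L y /\ L z).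

Definition flat (A : set X) : Prop :=
  forall x y, A x -> A y -> x <> y -> subset (line_through x y) A.

Definition closure (A : set X) : set X :=
  fun z => forall F, flat F -> subset A F -> F z.

Definition rank_le (A : set X) (n : nat) : Prop :=
  exists l : list X, length l <= n /\ subset A (closure (fun x => In x l)).

Definition rank_eq (A : set X) (n : nat) : Prop :=
  rank_le A n /\ (forall m, m < n -> ~ rank_le A m).

Definition three_ranked : Prop :=
  forall A B : set X, flat A -> flat B -> subset A B ->
    forall n, n <= 3 -> rank_eq A n -> rank_eq B n -> seteq A B.

Definition add_point (a : X) (B : set X) : set X := fun z => z = a \/ B z.

Definition subparallel (A B : set X) : Prop :=
  forall a, A a -> subset A (closure (add_point a B)).

Definition parallel (A B : set X) : Prop := subparallel A B /\ subparallel B A.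

Definition parallelogram (a b c d : X) : Prop :=
  parallel (line_through a b) (line_through c d) /\
  ~ seteq (line_through c d) (line_through a b) /\
  parallel (line_through b c) (line_through a d) /\
  ~ seteq (line_through b c) (line_through a d).

Definition boolean_parallelogram (a b c d : X) : Prop :=
  parallelogram a b c d /\ parallel (line_through a c) (line_through b d).

Definition boolean_liner : Prop :=
  forall a b c d : X,
    disjoint (line_through a b) (line_through c d) ->
    disjoint (line_through b c) (line_through a d) ->
    disjoint (line_through a c) (line_through b d).

End LinerDefs.

(* Main.v *)
Require Import Defs.
From Stdlib Require Import List Arith Lia Classical.
Import ListNotations.

Section S.
Variable X : Liner.
Notation ln := (line_through X).

Lemma ln_l (x y : X) : ln x y x.
Proof.
  unfold line_through. destruct (classic (x = y)) as [e|n]; [left; auto|].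
  right; split; auto. destruct (line_exists X x y n) as [L [? [? ?]]].
  exists L; auto.
Qed.

Lemma ln_r (x y : X) : ln x y y.
Proof.
  unfold line_through. destruct (classic (x = y)) as [e|n]; [left; auto|].
  right; split; auto. destruct (line_exists X x y n) as [L [? [? ?]]].
  exists L; auto.
Qed.

Lemma ln_sym (x y z : X) : ln x y z -> ln y x z.
Proof.
  intros [[e e']|[n [L [? [? [? ?]]]]]].
  - left; subst; auto.
  - right; split; [auto|exists L; tauto].
Qed.

Lemma ln_pt (u z : X) : ln u u z -> z = u.
Proof. intros [[_ e]|[n _]]; [auto|contradiction n; auto]. Qed.

Lemma ln_char (x y : X) L : x <> y -> is_line X L -> L x -> L y ->
  forall z, ln x y z <-> L z.
Proof.
  intros n HL Lx Ly z; split.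
  - intros [[e _]|[_ [L' [? [? [? ?]]]]]]; [contradiction|].
    apply (proj1 (line_unique X x y L' L n H H0 H1 HL Lx Ly z)); auto.
  - intros Hz; right; split; auto; exists L; auto.
Qed.

Lemma coll3 (u v a b c : X) : u <> v -> ln u v a -> ln u v b -> ln u v c ->
  a <> b -> ln a b c.
Proof.
  intros Huv Ha Hb Hc Hab.
  destruct (line_exists X u v Huv) as [L [HL [Lu Lv]]].
  apply (ln_char u v L Huv HL Lu Lv) in Ha.
  apply (ln_char u v L Huv HL Lu Lv) in Hb.
  apply (ln_char u v L Huv HL Lu Lv) in Hc.
  apply (ln_char a b L Hab HL Ha Hb). exact Hc.
Qed.

Lemma swap (x y z : X) : x <> y -> x <> z -> ln x y z -> ln x z y.
Proof. intros; apply coll3 with x y; auto using ln_l, ln_r. Qed.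

Lemma ln_flat (u v : X) : flat X (ln u v).
Proof.
  intros x y Hx Hy Hxy z Hz. destruct (classic (u = v)) as [e|Huv].
  - subst. apply ln_pt in Hx; apply ln_pt in Hy; subst; contradiction.
  - assert (ln x y u) by (apply coll3 with u v; auto using ln_l).
    assert (ln x y v) by (apply coll3 with u v; auto using ln_r).
    apply coll3 with x y; auto.
Qed.

Lemma flat_sub F (x y : X) : flat X F -> F x -> F y -> subset (ln x y) F.
Proof.
  intros HF Hx Hy z Hz. destruct (classic (x = y)) as [e|n].
  - subst. apply ln_pt in Hz; subst; auto.
  - apply (HF x y); auto.
Qed.

Lemma cl_incl (A : set X) : subset A (closure X A).
Proof. intros x Hx F HF HAF; auto. Qed.

Lemma cl_flat (A : set X) : flat X (closure X A).
Proof.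
  intros x y Hx Hy Hxy z Hz F HF HAF.
  apply (HF x y (Hx F HF HAF) (Hy F HF HAF) Hxy z Hz).
Qed.

Lemma cl_min (A F : set X) : flat X F -> subset A F -> subset (closure X A) F.
Proof. intros HF HAF x Hx; apply Hx; auto. Qed.

Lemma cl_mono (A B : set X) : subset A B -> subset (closure X A) (closure X B).
Proof.
  intros H; apply cl_min; [apply cl_flat|]. intros x Hx; apply cl_incl; auto.
Qed.

Definition noncoll (a b c : X) := a <> b /\ ~ ln a b c.
Definition pl (a b c : X) := closure X (fun x => In x [a;b;c]).

Lemma small_list (w : X) l : length l <= 2 ->
  exists u v, subset (closure X (fun x => In x l)) (ln u v).
Proof.
  destruct l as [|u [|v [|t l]]]; simpl; intros Hl.
  - exists w, w. apply cl_min; [apply ln_flat|]. intros x [].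
  - exists u, u. apply cl_min; [apply ln_flat|]. intros x [<-|[]]. apply ln_l.
  - exists u, v. apply cl_min; [apply ln_flat|].
    intros x [<-|[<-|[]]]; [apply ln_l|apply ln_r].
  - lia.
Qed.

Lemma pl_a a b c : pl a b c a. Proof. apply cl_incl; simpl; auto. Qed.
Lemma pl_b a b c : pl a b c b. Proof. apply cl_incl; simpl; auto. Qed.
Lemma pl_c a b c : pl a b c c. Proof. apply cl_incl; simpl; auto. Qed.

Lemma rank3 a b c : noncoll a b c -> rank_eq X (pl a b c) 3.
Proof.
  intros Hnc. split.
  - exists [a;b;c]; split; [simpl; lia| intros x Hx; exact Hx].
  - intros m Hm [l [Hl Hsub]].
    destruct (small_list a l) as [u [v Huv]]; [lia|].
    assert (Ha : ln u v a) by (apply Huv, Hsub, pl_a).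
    assert (Hb : ln u v b) by (apply Huv, Hsub, pl_b).
    assert (Hc : ln u v c) by (apply Huv, Hsub, pl_c).
    destruct (classic (u = v)) as [e|n].
    + subst. apply ln_pt in Ha; apply ln_pt in Hb; subst. apply (proj1 Hnc); auto.
    + apply (proj2 Hnc). apply coll3 with u v; auto. apply Hnc.
Qed.

Lemma plane_eq (TR : three_ranked X) p q r a b c : noncoll p q r -> noncoll a b c ->
  subset (fun x => In x [p;q;r]) (pl a b c) -> subset (pl a b c) (pl p q r).
Proof.
  intros H1 H2 H3.
  assert (Hs : subset (pl p q r) (pl a b c)) by (apply cl_min; [apply cl_flat|auto]).
  pose proof (TR _ _ (cl_flat _) (cl_flat _) Hs 3 (le_n 3) (rank3 _ _ _ H1)
    (rank3 _ _ _ H2)) as E.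
  intros x Hx; apply (proj2 (E x)); auto.
Qed.

Lemma subpar_in_plane (TR : three_ranked X) a b c u v s t : noncoll a b c ->
  s <> t -> subset (ln u v) (pl a b c) -> subset (ln s t) (pl a b c) ->
  disjoint (ln u v) (ln s t) -> subparallel X (ln u v) (ln s t).
Proof.
  intros Hnc Hst S1 S2 D x Hx.
  assert (Hn : noncoll s t x) by (split; auto; intros Hx'; apply (D x); auto).
  assert (Hp : subset (pl a b c) (pl s t x)).
  { apply plane_eq; auto. intros y [<-|[<-|[<-|[]]]].
    - apply S2, ln_l. - apply S2, ln_r. - apply S1; auto. }
  intros y Hy. apply (cl_mono (fun y => In y [s;t;x])).
  - intros z [<-|[<-|[<-|[]]]]; unfold add_point;
      [right; apply ln_l|right; apply ln_r|left; auto].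
  - apply Hp, S1, Hy.
Qed.

Lemma par_in_plane (TR : three_ranked X) a b c u v s t : noncoll a b c ->
  u <> v -> s <> t -> subset (ln u v) (pl a b c) -> subset (ln s t) (pl a b c) ->
  disjoint (ln u v) (ln s t) -> parallel X (ln u v) (ln s t).
Proof.
  intros. split; [eapply subpar_in_plane; eauto|].
  eapply subpar_in_plane; eauto. intros z [? ?]; apply (H4 z); auto.
Qed.

Lemma cl_pt (w z : X) : subset (closure X (add_point X w (ln z z))) (ln w z).
Proof.
  apply cl_min; [apply ln_flat|]. intros y [->|Hy]; [apply ln_l|].
  apply ln_pt in Hy; subst; apply ln_r.
Qed.

Lemma pt_not_subpar (x y z : X) : x <> y -> subparallel X (ln x y) (ln z z) -> False.
Proof.
  intros n H.
  assert (Hy : ln x z y) by (apply cl_pt, (H x (ln_l _ _)), ln_r).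
  destruct (classic (x = z)) as [e|n'].
  - subst. apply ln_pt in Hy; auto.
  - assert (Hz : ln x y z) by (apply swap; auto).
    assert (Hx : ln z z x) by (apply cl_pt, (H z Hz), ln_l).
    apply ln_pt in Hx; auto.
Qed.

Lemma par_distinct (a b c d : X) : parallel X (ln a b) (ln c d) -> (a = b <-> c = d).
Proof.
  intros [H1 H2]; split; intros e.
  - subst b. destruct (classic (c = d)) as [|n]; auto.
    exfalso; apply (pt_not_subpar c d a n H2).
  - subst d. destruct (classic (a = b)) as [|n]; auto.
    exfalso; apply (pt_not_subpar a b c n H1).
Qed.

Lemma par_disj (a b c d : X) : parallel X (ln a b) (ln c d) ->
  ~ seteq (ln c d) (ln a b) -> disjoint (ln a b) (ln c d).
Proof.
  intros [H1 H2] Hne p [Hp1 Hp2]. apply Hne. intros z; split; intro Hz.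
  - apply (cl_min (add_point X p (ln a b))); [apply ln_flat| |apply (H2 p Hp2); auto].
    intros w [->|Hw]; auto.
  - apply (cl_min (add_point X p (ln c d))); [apply ln_flat| |apply (H1 p Hp1); auto].
    intros w [->|Hw]; auto.
Qed.

Lemma pg_ne a b c d : parallelogram X a b c d -> a <> b /\ b <> c /\ c <> d /\ a <> d.
Proof.
  intros [P1 [N1 [P2 N2]]].
  assert (Hab : a <> b).
  { intros e. assert (c = d) by (apply (par_distinct _ _ _ _ P1); auto).
    subst b d. apply N2. intros z; tauto. }
  assert (Hbc : b <> c).
  { intros e. assert (a = d) by (apply (par_distinct _ _ _ _ P2); auto).
    subst c d. apply N1. intros z; split; apply ln_sym. }
  split; [auto|split; [auto|split]].
  - intros e; apply Hab; apply (par_distinct _ _ _ _ P1); auto.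
  - intros e; apply Hbc; apply (par_distinct _ _ _ _ P2); auto.
Qed.

End S.

Theorem theorem6p8p8 (X : Liner) :
  three_ranked X ->
  (boolean_liner X <->
   forall a b c d : X, parallelogram X a b c d -> boolean_parallelogram X a b c d).
Proof.
  intros TR. split.
  - intros HB a b c d Hpg. split; [exact Hpg|].
    destruct (pg_ne X a b c d Hpg) as [Hab [Hbc [Hcd Had]]].
    destruct Hpg as [P1 [N1 [P2 N2]]].
    pose proof (par_disj X _ _ _ _ P1 N1) as D1.
    assert (N2' : ~ seteq (line_through X a d) (line_through X b c))
      by (intros E; apply N2; intros z; specialize (E z); tauto).
    pose proof (par_disj X _ _ _ _ P2 N2') as D2.
    pose proof (HB a b c d D1 D2) as D3.
    assert (NC : noncoll X a b c).
    { split; auto. intros Hc; apply (D1 c); split; auto; apply ln_l. }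
    assert (Hac : a <> c).
    { intros e; subst c; apply (D1 a); split; apply ln_l. }
    assert (Hbd : b <> d).
    { intros e; subst d; apply (D2 b); split; [apply ln_l|apply ln_r]. }
    assert (Sab : subset (line_through X a b) (pl X a b c))
      by (apply flat_sub; [apply cl_flat|apply pl_a|apply pl_b]).
    assert (Hd : pl X a b c d).
    { apply (cl_min X (add_point X c (line_through X a b))).
      - apply cl_flat.
      - intros w [->|Hw]; [apply pl_c|apply Sab; auto].
      - apply (proj2 P1 c (ln_l _ _ _)), ln_r. }
    apply (par_in_plane X TR a b c); auto.
    + apply flat_sub; [apply cl_flat|apply pl_a|apply pl_c].
    + apply flat_sub; [apply cl_flat|apply pl_b|auto].
  - intros HP a b c d D1 D2 p [Hp1 Hp2].
    assert (Hab : a <> b) by (intros e; subst b; apply (D2 a); split; apply ln_l).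
    assert (NC : ~ line_through X a b c)
      by (intros Hc; apply (D1 c); split; [auto|apply ln_l]).
    assert (Hac : a <> c) by (intros e; subst c; apply (D1 a); split; apply ln_l).
    assert (Hbd : b <> d)
      by (intros e; subst d; apply (D2 b); split; [apply ln_l|apply ln_r]).
    assert (Hcd : c <> d)
      by (intros e; subst d; apply (D2 c); split; apply ln_r).
    assert (Hbc : b <> c)
      by (intros e; subst c; apply (D1 b); split; [apply ln_r|apply ln_l]).
    assert (Had : a <> d)
      by (intros e; subst d; apply (D1 a); split; [apply ln_l|apply ln_r]).
    assert (Hbp : b <> p).
    { intros e; subst p. apply NC. apply swap; auto. }
    assert (Hd' : line_through X b p d) by (apply swap; auto).
    assert (Hp : pl X a b c p)
      by (apply (flat_sub X _ a c); [apply cl_flat|apply pl_a|apply pl_c|auto]).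
    assert (Hd : pl X a b c d)
      by (apply (flat_sub X _ b p); [apply cl_flat|apply pl_b|auto|auto]).
    assert (NCa : noncoll X a b c) by (split; auto).
    assert (Hpg : parallelogram X a b c d).
    { split; [|split; [|split]].
      - apply (par_in_plane X TR a b c); auto.
        + apply flat_sub; [apply cl_flat|apply pl_a|apply pl_b].
        + apply flat_sub; [apply cl_flat|apply pl_c|auto].
      - intros E; apply NC; apply E; apply ln_l.
      - apply (par_in_plane X TR a b c); auto.
        + apply flat_sub; [apply cl_flat|apply pl_b|apply pl_c].
        + apply flat_sub; [apply cl_flat|apply pl_a|auto].
      - intros E; apply (D2 b); split; [apply ln_l|apply E, ln_l]. }
    destruct (HP a b c d Hpg) as [_ Pac].
    assert (N : ~ seteq (line_through X b d) (line_through X a c)).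
    { intros E. apply NC. apply swap; auto. apply E, ln_l. }
    apply (par_disj X _ _ _ _ Pac N p); auto.
Qed.
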